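(* Let $K\ge 2$ and let $O_1,\dots,O_K\subset\mathbb{R}^3$ be watertight objects with signed distance functions $SDF_1,\dots,SDF_K$, and set $SDF=[SDF_1,\ldots,SDF_K]:\mathbb{R}^3\to\mathbb{R}^K$. Then $SDF$ satisfies $\min^{(2)}(\mathbf{u})\ge 0$ at every point $\mathbf{p}\in\mathbb{R}^3$, where $\mathbf{u}=SDF(\mathbf{p})$, if and only if it satisfies $$\min^{(1)}(\mathbf{u})+\min^{(2)}(\mathbf{u})\ge 0$$ at every point $\mathbf{p}\in\mathbb{R}^3$, where $\mathbf{u}=SDF(\mathbf{p})$.
   Context: For a watertight object $O\subset\mathbb{R}^3$ with boundary $\partial O$, its signed distance function is $SDF_O(\mathbf{p})=-\min_{\mathbf{q}\in\partial O}\|\mathbf{p}-\mathbf{q}\|$ if $\mathbf{p}\in O$ and $SDF_O(\mathbf{p})=\min_{\mathbf{q}\in\partial O}\|\mathbf{p}-\mathbf{q}\|$ if $\mathbf{p}\notin O$ (negative inside, positive outside). For a vector $\mathbf{u}\in\mathbb{R}^K$, $\min^{(n)}(\mathbf{u})$ denotes the $n$-th smallest entry of $\mathbf{u}$ (counted with multiplicity), so $\min^{(1)}$ is the minimum and $\min^{(2)}$ the second smallest entry. *)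

(* Defs.v *)
From HB Require Import structures.
From mathcomp Require Import all_boot all_order all_algebra.
From mathcomp Require Import all_classical all_reals all_analysis.
Set Implicit Arguments. Unset Strict Implicit. Unset Printing Implicit Defensive.
Import Order.TTheory GRing.Theory Num.Theory.
Import numFieldNormedType.Exports.
Local Open Scope classical_set_scope.
Local Open Scope ring_scope.

(* Points of R^3 are row vectors 'rV[R]_3; topology = product topology
   (same as the Euclidean one). Distances are Euclidean. *)
Definition eucl_dist (R : realType) (p q : 'rV[R]_3) : R :=
  Num.sqrt (\sum_(i < 3) (p ord0 i - q ord0 i) ^+ 2).

Definition bdry (R : realType) (O : set 'rV[R]_3) : set 'rV[R]_3 :=
  closure O `\` interior O.

Definition watertight (R : realType) (O : set 'rV[R]_3) : Prop :=
  [/\ compact O, O = closure (interior O) & interior O !=set0].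

Definition SDF (R : realType) (O : set 'rV[R]_3) (p : 'rV[R]_3) : R :=
  let d := inf [set eucl_dist p q | q in bdry O] in
  if `[< O p >] then - d else d.

(* n-th smallest entry (1-based, with multiplicity) of u : R^K *)
Definition min_nth (R : realType) (K : nat) (n : nat) (u : 'I_K -> R) : R :=
  nth 0 (sort <=%R [seq u i | i <- enum 'I_K]) n.-1.

Definition SDFvec (R : realType) (K : nat) (O : 'I_K -> set 'rV[R]_3)
  (p : 'rV[R]_3) : 'I_K -> R := fun k => SDF (O k) p.

(* Main.v *)
Require Import Defs.
From HB Require Import structures.
From mathcomp Require Import all_boot all_order all_algebra.
From mathcomp Require Import all_classical all_reals all_analysis.
From mathcomp Require Import ring lra.
Import Order.TTheory GRing.Theory Num.Theory.
Import numFieldNormedType.Exports.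
Local Open Scope classical_set_scope.
Local Open Scope ring_scope.
Set Implicit Arguments. Unset Strict Implicit.
Lemma sumsq_ge0 (R : realType) (x y : 'rV[R]_3) :
  0 <= \sum_(i < 3) (x ord0 i - y ord0 i) ^+ 2.
Proof. by apply: sumr_ge0 => i _; exact: sqr_ge0. Qed.

Lemma norm_le_eucl (R : realType) (x y : 'rV[R]_3) : `|x - y| <= eucl_dist x y.
Proof.
have -> : `|x - y| = mx_norm (x - y) by [].
rewrite mx_normrE; apply: bigmax_le => [|[i j] _ /=]; first exact: sqrtr_ge0.
rewrite /eucl_dist !mxE -sqrtr_sqr ler_sqrt; last exact: sumsq_ge0.
rewrite (ord1 i) (bigD1 j) //= lerDl; apply: sumr_ge0 => k _; exact: sqr_ge0.
Qed.

Lemma eucl_le_norm (R : realType) (x y : 'rV[R]_3) : eucl_dist x y <= 3 * `|x - y|.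
Proof.
have m0 : 0 <= `|x - y| by [].
have -> : 3 * `|x - y| = Num.sqrt ((3 * `|x - y|) ^+ 2).
  by rewrite sqrtr_sqr ger0_norm // mulr_ge0.
rewrite /eucl_dist ler_sqrt; last exact: sqr_ge0.
have hb : forall i : 'I_3, (x ord0 i - y ord0 i) ^+ 2 <= `|x - y| ^+ 2.
  move=> i; rewrite -real_normK ?num_real // lerXn2r ?nnegrE //.
  have -> : `|x - y| = mx_norm (x - y) by [].
  rewrite mx_normrE; have := le_bigmax 0 (fun ij : 'I_1 * 'I_3 => `|(x - y) ij.1 ij.2|) (ord0, i).
  by rewrite /= !mxE.
apply: (le_trans (ler_sum _ (fun i _ => hb i))).
rewrite sumr_const card_ord exprMn.
have h := sqr_ge0 `|x - y|; move: h.
set a := _ ^+ 2; move=> h; rewrite -mulr_natl; lra.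
Qed.
Lemma nbhs_eucl (R : realType) (x : 'rV[R]_3) (A : set 'rV[R]_3) :
  nbhs x A -> exists2 e : R, 0 < e & forall y, eucl_dist x y < e -> A y.
Proof.
move=> /nbhs_ballP [e e0 he]; exists e => // y hy; apply: he.
rewrite mx_norm_ball /ball_ /=.
have h := norm_le_eucl x y.
exact: (le_lt_trans h hy).
Qed.

Lemma eucl_closed (R : realType) (x : 'rV[R]_3) (A : set 'rV[R]_3) :
  closed A -> (forall e : R, 0 < e -> exists2 y, A y & eucl_dist x y < e) -> A x.
Proof.
move=> /closure_id cA h; rewrite cA => B /nbhs_ballP [e e0 he].
have e30 : 0 < e / 3 by rewrite divr_gt0.
have [y Ay hy] := h _ e30.
exists y; split => //; apply: he.
rewrite mx_norm_ball /ball_ /=.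
apply: (le_lt_trans (norm_le_eucl x y)); move: e0 => /= e0; lra.
Qed.
Lemma conn01 (R : realType) (P : R -> Prop) :
  P 0 ->
  (forall t, 0 <= t <= 1 -> P t -> exists2 e, 0 < e & forall s, t <= s < t + e -> P s) ->
  (forall t, 0 < t <= 1 -> (forall s, 0 <= s < t -> P s) -> P t) ->
  P 1.
Proof.
move=> P0 Hr Hl.
pose S := [set t : R | 0 <= t <= 1 /\ forall s, 0 <= s <= t -> P s].
have S0 : S 0.
  split; first by rewrite lexx ler01.
  by move=> s /andP[h1 h2]; have -> : s = 0 by apply/eqP; rewrite eq_le h1 h2.
have Sub : has_ubound S by exists 1 => t [/andP[_ ?] _].
have Sne : S !=set0 by exists 0.
set T := sup S.
have T0 : 0 <= T by exact: ub_le_sup.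
have T1 : T <= 1 by apply: ge_sup => // t [/andP[_ ?] _].
have Hs : forall s, 0 <= s < T -> P s.
  move=> s /andP[s0 sT].
  have [t [_ Pt] ht] := @sup_adherent _ S (T - s) (ltac:(by rewrite subr_gt0)) (conj Sne Sub).
  apply: Pt; rewrite s0 /=; move: ht; rewrite -/T; lra.
have PT : P T.
  have [->|Tne] := eqVneq T 0; first exact: P0.
  apply: Hl => //; rewrite T1 andbT lt_neqAle eq_sym Tne T0 //.
have [e e0 He] := Hr T (ltac:(by rewrite T0 T1)) PT.
have [T1'|] := eqVneq T 1; first by rewrite -T1'.
move=> Tn1; have Tlt1 : T < 1 by rewrite lt_neqAle Tn1 T1.
pose t' := Num.min (T + e / 2) 1.
have St' : S t'.
  split.
    rewrite /t' ge_min lexx orbT andbT le_min ler01 andbT.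
    by apply: addr_ge0 => //; apply: ltW; rewrite divr_gt0.
  move=> s /andP[s0 st].
  have [sT|Ts] := ltP s T; first by apply: Hs; rewrite s0 sT.
  apply: He; rewrite Ts /=.
  move: st; rewrite /t' le_min => /andP[h _]; lra.
have := ub_le_sup Sub St'; rewrite -/T /t' ge_min => /orP[|]; lra.
Qed.

Definition seg (R : realType) (p q : 'rV[R]_3) (t : R) : 'rV[R]_3 := p + t *: (q - p).

Lemma seg0 (R : realType) (p q : 'rV[R]_3) : seg p q 0 = p.
Proof. by rewrite /seg scale0r addr0. Qed.

Lemma seg1 (R : realType) (p q : 'rV[R]_3) : seg p q 1 = q.
Proof. by rewrite /seg scale1r addrC subrK. Qed.

Lemma eucl_seg (R : realType) (p q : 'rV[R]_3) t s :
  eucl_dist (seg p q t) (seg p q s) = `|t - s| * eucl_dist p q.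
Proof.
rewrite /eucl_dist -sqrtr_sqr -sqrtrM ?sqr_ge0 // mulr_sumr; congr Num.sqrt.
apply: eq_bigr => i _; rewrite /seg !mxE.
by rewrite -exprMn -sqrrN; congr (_ ^+ 2); ring.
Qed.

Lemma eucl_ge0 (R : realType) (p q : 'rV[R]_3) : 0 <= eucl_dist p q.
Proof. exact: sqrtr_ge0. Qed.

Lemma small_mul (R : realType) (a D e : R) : 0 <= D -> 0 < e ->
  0 <= a -> a < e / (D + 1) -> a * D < e.
Proof.
move=> D0 e0 a0 h.
have D1 : 0 < D + 1 by lra.
move: h; rewrite ltr_pdivlMr // => h.
apply: le_lt_trans h; rewrite ler_wpM2l //; lra.
Qed.

Lemma seg_in (R : realType) (O : set 'rV[R]_3) (p q : 'rV[R]_3) :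
  closed O -> O p ->
  (forall t, 0 <= t <= 1 -> O (seg p q t) -> interior O (seg p q t)) -> O q.
Proof.
move=> cO Op Hint; rewrite -(seg1 p q).
set D := eucl_dist p q.
have D0 : 0 <= D := eucl_ge0 p q.
apply: (@conn01 R (fun t => O (seg p q t))).
- by rewrite seg0.
- move=> t t01 Pt.
  have [e e0 He] := nbhs_eucl (Hint t t01 Pt).
  have e'0 : 0 < e / (D + 1) by rewrite divr_gt0 //; lra.
  exists (e / (D + 1)) => // s /andP[ts st]; apply: He.
  rewrite eucl_seg; apply: small_mul => //.
  rewrite -/D ler0_norm ?subr_le0 //; lra.
- move=> t /andP[t0 t1] Hs; apply: eucl_closed => // e e0.
  have e'0 : 0 < e / (D + 1) by rewrite divr_gt0 //; lra.
  set e' := e / (D + 1) in e'0 *.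
  pose s := Num.max 0 (t - e' / 2).
  have s0 : 0 <= s by rewrite /s le_max lexx.
  have st : s < t by rewrite /s gt_max t0 /=; lra.
  have ts0 : t - e'/2 <= s by rewrite /s le_max lexx orbT.
  have ts : t - s <= e' / 2 by lra.
  exists (seg p q s); first by apply: Hs; rewrite s0 st.
  rewrite eucl_seg; apply: small_mul => //.
  rewrite -/D -/e' ger0_norm ?subr_ge0; lra.
Qed.
Lemma min_nthE (R : realType) K n (u : 'I_K -> R) :
  min_nth n u = (sort <=%R [seq u i | i <- enum 'I_K])`_n.-1.
Proof. by []. Qed.

Lemma size_sortK (R : realType) K (u : 'I_K -> R) :
  size (sort <=%R [seq u i | i <- enum 'I_K]) = K.
Proof. by rewrite size_sort size_map size_enum_ord. Qed.

Lemma min12_le (R : realType) K (u : 'I_K -> R) : (2 <= K)%N ->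
  min_nth 1 u <= min_nth 2 u.
Proof.
move=> K2; rewrite !min_nthE /=.
have := sort_le_sorted [seq u i | i <- enum 'I_K].
move=> /(sortedP 0) -> //; by rewrite size_sortK.
Qed.

Lemma min12_idx (R : realType) K (u : 'I_K -> R) : (2 <= K)%N ->
  exists a b, [/\ a != b, min_nth 1 u = u a & min_nth 2 u = u b].
Proof.
move=> K2; have K0 : (0 < K)%N by apply: leq_trans K2.
pose x0 := Ordinal K0.
rewrite !min_nthE /= sort_map.
set t := sort _ _.
have st : size t = K by rewrite size_sort size_enum_ord.
have ut : uniq t by rewrite sort_uniq enum_uniq.
exists (nth x0 t 0), (nth x0 t 1); split.
- by rewrite nth_uniq ?st.
- by rewrite (nth_map x0) // st.
- by rewrite (nth_map x0) // st.
Qed.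

Lemma min2_neg (R : realType) K (u : 'I_K -> R) (i j : 'I_K) :
  i != j -> u i < 0 -> u j < 0 -> min_nth 2 u < 0.
Proof.
move=> ij ui uj; rewrite min_nthE /=.
apply: nth_count_lt; first exact: sort_le_sorted.
rewrite (permP (permEl (perm_sort _ _))) count_map.
set E := enum 'I_K.
have uE : uniq E by exact: enum_uniq.
have h1 : (count (predU (pred1 i) (pred1 j)) E <= count (preim u (fun x : R => (x < 0)%R)) E)%N.
  apply: sub_count => k /orP[/eqP->|/eqP->] /=; by [rewrite ui|rewrite uj].
apply: leq_trans h1.
have := count_predUI (pred1 i) (pred1 j) E.
have -> : count (predI (pred1 i) (pred1 j)) E = 0%N.
  apply/eqP; rewrite -leqn0 -(count_pred0 E); apply: sub_count => k /andP[/eqP-> /eqP e].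
  by rewrite e eqxx in ij.
rewrite addn0 => ->.
by rewrite !count_uniq_mem // !mem_enum.
Qed.

Definition Dist (R : realType) (O : set 'rV[R]_3) (p : 'rV[R]_3) : R :=
  inf [set eucl_dist p q | q in bdry O].

Lemma SDFE (R : realType) (O : set 'rV[R]_3) p :
  SDF O p = if `[< O p >] then - Dist O p else Dist O p.
Proof. by []. Qed.

Lemma wt_closed (R : realType) (O : set 'rV[R]_3) : watertight O -> closed O.
Proof. by case=> cO _ _; apply: compact_closed => //; exact: norm_hausdorff. Qed.

Lemma wt_bdry (R : realType) (O : set 'rV[R]_3) q : watertight O ->
  bdry O q <-> O q /\ ~ interior O q.
Proof.
move=> /wt_closed /closure_id cO; rewrite /bdry -cO; split; by case.
Qed.

Lemma entry_le_norm (R : realType) (x : 'rV[R]_3) i : `|x ord0 i| <= `|x|.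
Proof.
have -> : `|x| = mx_norm x by [].
rewrite mx_normrE.
exact: (le_bigmax 0 (fun ij : 'I_1 * 'I_3 => `|x ij.1 ij.2|) (ord0, i)).
Qed.

Lemma wt_bdry_ne (R : realType) (O : set 'rV[R]_3) : watertight O -> bdry O !=set0.
Proof.
move=> wO; have cO := wt_closed wO.
case: (wO) => kO _ [x0 ix0].
have Ox0 := interior_subset ix0.
apply/set0P/negP => /eqP b0.
have all : forall q, O q.
  move=> q; apply: (seg_in cO Ox0) => t _ Ot.
  apply: contrapT => nint.
  have : bdry O (seg x0 q t) by apply/(wt_bdry _ wO).
  by rewrite b0.
have [M M0 HM] := pinfty_ex_gt0 (compact_bounded kO).
pose q : 'rV[R]_3 := const_mx (M + 1).
have := HM q (all q); rewrite /=.
have := entry_le_norm q ord0; rewrite /q mxE ger0_norm; last lra.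
lra.
Qed.

Lemma Dist_ge0 (R : realType) (O : set 'rV[R]_3) p : bdry O !=set0 -> 0 <= Dist O p.
Proof.
move=> [q bq]; apply: lb_le_inf; first by exists (eucl_dist p q), q.
by move=> _ [y _ <-]; exact: eucl_ge0.
Qed.

Lemma Dist_le (R : realType) (O : set 'rV[R]_3) p q : bdry O q -> Dist O p <= eucl_dist p q.
Proof.
move=> bq; apply: ge_inf; last by exists q.
by exists 0 => _ [y _ <-]; exact: eucl_ge0.
Qed.

Lemma Dist_lt (R : realType) (O : set 'rV[R]_3) p c : bdry O !=set0 ->
  Dist O p < c -> exists2 q, bdry O q & eucl_dist p q < c.
Proof.
move=> [q0 bq0] h.
have ne : [set eucl_dist p q | q in bdry O] !=set0 by exists (eucl_dist p q0), q0.
have [_ [q bq <-] hq] := inf_lt ne h.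
by exists q.
Qed.

Lemma eucl_self (R : realType) (p : 'rV[R]_3) : eucl_dist p p = 0.
Proof.
rewrite /eucl_dist (eq_bigr (fun _ => 0)) ?big1 ?sqrtr0 // => i _.
by rewrite subrr expr0n.
Qed.

Lemma Dist_pos (R : realType) (O : set 'rV[R]_3) p : watertight O ->
  interior O p -> 0 < Dist O p.
Proof.
move=> wO ip.
have [e e0 He] := nbhs_eucl (open_nbhs_nbhs (conj (@open_interior _ O) ip)).
apply: (lt_le_trans e0); apply: lb_le_inf.
  by have [q0 bq0] := wt_bdry_ne wO; exists (eucl_dist p q0), q0.
move=> _ [y yb <-]; rewrite leNgt; apply/negP => hy.
have := He y hy; have := (wt_bdry _ wO).1 yb; case => _ + h; exact.
Qed.

Lemma SDF_neg (R : realType) (O : set 'rV[R]_3) p : watertight O ->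
  (SDF O p < 0 <-> interior O p).
Proof.
move=> wO; have bn := wt_bdry_ne wO.
rewrite SDFE; split.
- case: asboolP => Op.
  + rewrite oppr_lt0 => Dp; apply: contrapT => nip.
    have bp : bdry O p by apply/(wt_bdry _ wO).
    have := Dist_le p bp; rewrite eucl_self; lra.
  + have := Dist_ge0 p bn; lra.
- move=> ip; rewrite asboolT; last exact: interior_subset.
  rewrite oppr_lt0; exact: Dist_pos.
Qed.

Lemma clash (R : realType) (O1 O2 : set 'rV[R]_3) x :
  watertight O2 -> O2 x -> interior O1 x ->
  exists y, interior O2 y /\ interior O1 y.
Proof.
case=> _ e _ O2x ix.
have nb : nbhs x (interior O1) by apply: open_nbhs_nbhs; split => //; exact: open_interior.
move: O2x; rewrite {1}e => /(_ _ nb) [y [h1 h2]]; by exists y.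
Qed.

Lemma key (R : realType) K (O : 'I_K -> set 'rV[R]_3)
  (wO : forall k, watertight (O k))
  (H' : forall x a b, a != b -> interior (O a) x -> interior (O b) x -> False)
  a b p : a != b -> SDF (O a) p < 0 -> - SDF (O a) p <= SDF (O b) p.
Proof.
move=> ab neg.
have ia := (SDF_neg p (wO a)).1 neg.
have Oa := interior_subset ia.
rewrite (SDFE (O a)) asboolT // opprK.
set d := Dist (O a) p.
rewrite leNgt; apply/negP => lt.
case: (pselect (O b p)) => Ob.
- have [y [iy1 iy2]] := clash (wO b) Ob ia; exact: H' y a b ab iy2 iy1.
- move: lt; rewrite SDFE asboolF // => lt.
  have [q bq hq] := Dist_lt (wt_bdry_ne (wO b)) lt.
  have hint : forall t, 0 <= t <= 1 -> O a (seg p q t) -> interior (O a) (seg p q t).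
    move=> t /andP[t0 t1] Ot; apply: contrapT => nint.
    have bt : bdry (O a) (seg p q t) by apply/(wt_bdry _ (wO a)).
    have es := eucl_seg p q 0 t; rewrite seg0 in es.
    have := Dist_le p bt; rewrite es -/d.
    rewrite sub0r normrN ger0_norm // => h.
    have E0 := eucl_ge0 p q.
    have : t * eucl_dist p q <= eucl_dist p q by rewrite ler_piMl.
    lra.
  have Oq : O a q by apply: (seg_in (wt_closed (wO a)) Oa hint).
  have iq : interior (O a) q.
    by rewrite -(seg1 p q); apply: hint; [rewrite ler01 lexx | rewrite seg1].
  have Obq : O b q := ((wt_bdry _ (wO b)).1 bq).1.
  have [y [iy1 iy2]] := clash (wO b) Obq iq; exact: H' y a b ab iy2 iy1.
Qed.

Unset Implicit Arguments.
Theorem theorem1 (R : realType) (K : nat) (O : 'I_K -> set 'rV[R]_3) :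
  (2 <= K)%N ->
  (forall k, watertight (O k)) ->
  ((forall p : 'rV[R]_3, 0 <= min_nth 2 (SDFvec O p)) <->
   (forall p : 'rV[R]_3,
      0 <= min_nth 1 (SDFvec O p) + min_nth 2 (SDFvec O p))).
Proof.
move=> K2 wO; split.
- move=> H p.
  have H' : forall x a b, a != b -> interior (O a) x -> interior (O b) x -> False.
    move=> x a b ab ia ib; have := H x; rewrite leNgt => /negP; apply.
    by apply: (min2_neg ab); rewrite /SDFvec; apply/(SDF_neg _ (wO _)).
  have [a [b [ab -> ->]]] := min12_idx (SDFvec O p) K2.
  rewrite /SDFvec.
  case: (ltP (SDF (O a) p) 0) => ha.
    by have := key wO H' ab ha; lra.
  case: (ltP (SDF (O b) p) 0) => hb.
    have ba : b != a by rewrite eq_sym.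
    by have := key wO H' ba hb; lra.
  lra.
- move=> H p; have := H p; have := min12_le (SDFvec O p) K2; lra.
Qed.
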